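(* Let $1\le p\le n$, $\beta>0$, and $X\in\mathbb{R}^{n\times p}_*$. Let $\mathrm{T}_X\mathrm{St}_{X^\top X}=\{\xi\in\mathbb{R}^{n\times p}\mid \xi^\top X+X^\top\xi=0\}$ be the tangent space at $X$ of $\mathrm{St}_{X^\top X}=\{Y\in\mathbb{R}^{n\times p}\mid Y^\top Y=X^\top X\}$. The orthogonal projection $\mathrm{Proj}_{X,\beta}:\mathbb{R}^{n\times p}\to\mathrm{T}_X\mathrm{St}_{X^\top X}$ with respect to $g^\beta_X$ (i.e., the map characterized by $\mathrm{Proj}_{X,\beta}(Z)\in\mathrm{T}_X\mathrm{St}_{X^\top X}$ and $g^\beta_X(\xi,Z-\mathrm{Proj}_{X,\beta}(Z))=0$ for all $\xi\in\mathrm{T}_X\mathrm{St}_{X^\top X}$) is given, for all $Z\in\mathbb{R}^{n\times p}$, by \[\mathrm{Proj}_{X,\beta}(Z)=X(X^\top X)^{-1}\operatorname{skew}(X^\top Z)+\big(\mathrm{I}_n-X(X^\top X)^{-1}X^\top\big)Z.\]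
   Context: $\mathbb{R}^{n\times p}_*$ denotes the set of full-rank (rank $p$) real $n\times p$ matrices, and $\operatorname{skew}(A)=(A-A^\top)/2$. For $\beta>0$ and $X\in\mathbb{R}^{n\times p}_*$, the $\beta$-metric is the inner product on $\mathbb{R}^{n\times p}$ given by \[g^\beta_X(\xi,\zeta)=\mathrm{trace}\Big(\xi^\top\big(\mathrm{I}_n-(1-\beta)X(X^\top X)^{-1}X^\top\big)\zeta\,(X^\top X)^{-1}\Big),\qquad \xi,\zeta\in\mathbb{R}^{n\times p}.\] *)

(* Defs.v *)
From mathcomp Require Import all_boot all_order all_algebra.
Set Implicit Arguments. Unset Strict Implicit. Unset Printing Implicit Defensive.
Import Order.TTheory GRing.Theory Num.Theory.
Local Open Scope ring_scope.

Definition skew (R : realFieldType) (p : nat) (A : 'M[R]_p) : 'M[R]_p :=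
  2^-1 *: (A - A^T).

Definition gbeta (R : realFieldType) (n p : nat) (beta : R) (X : 'M[R]_(n, p))
  (xi zeta : 'M[R]_(n, p)) : R :=
  \tr (xi^T *m (1%:M - (1 - beta) *: (X *m invmx (X^T *m X) *m X^T))
        *m zeta *m invmx (X^T *m X)).

Definition tangentSt (R : realFieldType) (n p : nat) (X xi : 'M[R]_(n, p)) : Prop :=
  xi^T *m X + X^T *m xi = 0.

Definition projFormula (R : realFieldType) (n p : nat) (X Z : 'M[R]_(n, p))
  : 'M[R]_(n, p) :=
  X *m invmx (X^T *m X) *m skew (X^T *m Z)
  + (1%:M - X *m invmx (X^T *m X) *m X^T) *m Z.

(* Main.v *)
Require Import Defs.
From mathcomp Require Import all_boot all_order all_algebra.
From mathcomp Require Import ring lra.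
Import Order.TTheory GRing.Theory Num.Theory.
Local Open Scope ring_scope.

Lemma tr_sq0 (R : realFieldType) (m k : nat) (A : 'M[R]_(m, k)) :
  \tr (A^T *m A) = 0 -> A = 0.
Proof.
have -> : \tr (A^T *m A) = \sum_i \sum_j A j i ^+ 2.
  by rewrite /mxtrace; apply: eq_bigr => i _; rewrite !mxE; apply: eq_bigr => j _; rewrite !mxE expr2.
move/eqP; rewrite psumr_eq0; last by move=> i _; apply: sumr_ge0 => j _; exact: sqr_ge0.
move/allP => H; apply/matrixP => j i; rewrite mxE.
have := H i (mem_index_enum i); rewrite /= psumr_eq0; last by move=> l _; exact: sqr_ge0.
by move/allP/(_ j (mem_index_enum j)); rewrite /= sqrf_eq0 => /eqP.
Qed.

Lemma G_unit (R : realFieldType) (n p : nat) (X : 'M[R]_(n, p)) :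
  \rank X = p -> (X^T *m X) \in unitmx.
Proof.
move=> hr; rewrite -row_free_unit; apply: inj_row_free => v hv.
have hfree : row_free X^T by rewrite /row_free mxrank_tr hr.
have : (v *m X^T)^T = 0.
  apply: tr_sq0; rewrite trmxK.
  by rewrite trmx_mul trmxK mulmxA -(mulmxA v) hv !mul0mx mxtrace0.
move/(congr1 trmx); rewrite trmxK trmx0 => /eqP.
by rewrite mulmx_free_eq0 // => /eqP.
Qed.

Lemma tr_skew_sym (R : realFieldType) (p : nat) (B H S : 'M[R]_p) :
  B^T = - B -> S^T = S -> H^T = H -> \tr (B *m H *m S *m H) = 0.
Proof.
move=> hB hS hH.
have e : \tr (B *m H *m S *m H) = - \tr (B *m H *m S *m H).
  rewrite -{1}mxtrace_tr !trmx_mul hB hS hH !mulmxN linearN /= !mulmxA.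
  by rewrite (mxtrace_mulC (H *m S *m H)) !mulmxA.
lra.
Qed.

Lemma zmod_aux (V : zmodType) (a b c : V) : a - (b + (a - c)) = c - b.
Proof. by rewrite opprD opprB addrCA (addrCA a) subrr addr0 addrC. Qed.

Lemma zmod_aux2 (V : zmodType) (z f w : V) : (z - w) - (z - f) = f - w.
Proof. by rewrite opprB addrC addrA subrK. Qed.

Theorem proposition4 (R : realFieldType) (n p : nat) (beta : R)
  (X : 'M[R]_(n, p)) :
  (1 <= p)%N -> (p <= n)%N -> 0 < beta -> \rank X = p ->
  forall Z : 'M[R]_(n, p),
    [/\ tangentSt X (projFormula X Z),
        (forall xi, tangentSt X xi -> gbeta beta X xi (Z - projFormula X Z) = 0)
      & (forall W, tangentSt X W ->
           (forall xi, tangentSt X xi -> gbeta beta X xi (Z - W) = 0) ->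
           W = projFormula X Z)].
Proof.
move=> _ _ hbeta hr Z.
have hGu := @G_unit R n p X hr.
set G := X^T *m X in hGu *.
set Gi := invmx G.
have hGT : G^T = G by rewrite /G trmx_mul trmxK.
have hGiT : Gi^T = Gi by rewrite /Gi trmx_inv hGT.
have hXX : forall m (K : 'M[R]_(m, p)), K *m X^T *m X = K *m G by move=> m K; rewrite -mulmxA.
have hGGi : forall m (K : 'M[R]_(m, p)), K *m G *m Gi = K by move=> m K; rewrite mulmxK.
have hGiG : forall m (K : 'M[R]_(m, p)), K *m Gi *m G = K by move=> m K; rewrite mulmxKV.
set P := X *m Gi *m X^T.
have hPT : P^T = P by rewrite /P !trmx_mul trmxK hGiT mulmxA.
have hPX : forall m (K : 'M[R]_(m, n)), K *m P *m X = K *m X.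
  move=> m K; rewrite /P !mulmxA hXX. exact: (hGiG _ (K *m X)).
have hXP : forall m (K : 'M[R]_(m, p)), K *m X^T *m P = K *m X^T.
  move=> m K; rewrite /P !mulmxA hXX (mulmxK hGu) //.
set M := 1%:M - (1 - beta) *: P.
have hMX : forall m (K : 'M[R]_(m, n)), K *m M *m X = beta *: (K *m X).
  move=> m K; rewrite /M mulmxBr mulmx1 mulmxBl -scalemxAr -scalemxAl hPX.
  by rewrite scalerBl scale1r opprB addrCA subrr addr0.
set A := X^T *m Z.
set S := Defs.skew A.
have hST : S^T = - S.
  apply/matrixP => i j; rewrite /S /Defs.skew !mxE; lra.
have hF : projFormula X Z = X *m Gi *m S + (Z - P *m Z).
  by rewrite /projFormula -/G -/Gi -/P -/S mulmxBl mul1mx.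
have hXtF : X^T *m projFormula X Z = S.
  by rewrite hF mulmxDr mulmxBr !mulmxA -/G (mulmxV hGu) !mul1mx subrr addr0.
have hFtX : (projFormula X Z)^T *m X = - S.
  rewrite -[_^T *m X]trmxK trmx_mul trmxK hXtF hST.
  done.
have skewB : forall xi : 'M[R]_(n, p), tangentSt X xi -> (xi^T *m X)^T = - (xi^T *m X).
  move=> xi; rewrite /tangentSt => /eqP; rewrite addrC addr_eq0 => /eqP <-.
  by rewrite trmx_mul trmxK.
have hgb : forall xi zeta, gbeta beta X xi zeta = \tr (xi^T *m M *m zeta *m Gi).
  by move=> xi zeta; rewrite /gbeta -/G -/Gi -/P -/M.
have hFt : tangentSt X (projFormula X Z) by rewrite /tangentSt hFtX hXtF addNr.
have hFo : forall xi, tangentSt X xi -> gbeta beta X xi (Z - projFormula X Z) = 0.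
  move=> xi hxi.
  have -> : Z - projFormula X Z = X *m Gi *m (A - S).
    by rewrite hF mulmxBr /P /A !mulmxA zmod_aux.
  rewrite hgb !mulmxA hMX -!scalemxAl mxtraceZ tr_skew_sym ?mulr0 //.
    by apply: skewB.
  apply/matrixP => i j; rewrite /S /Defs.skew !mxE; lra.
split => // W hWt hWo.
set F := projFormula X Z in hFt hFo *.
set D := F - W.
have hDdef : D = F - W by [].
have hDt : tangentSt X D.
  move: hFt hWt; rewrite /tangentSt /D linearB /= mulmxBl mulmxBr => h1 h2.
  by rewrite addrACA h1 -opprD h2 oppr0 addr0.
have hDo : forall xi, tangentSt X xi -> gbeta beta X xi D = 0.
  move=> xi hxi; rewrite -[D](zmod_aux2 _ Z) hgb mulmxBr mulmxBl linearB /= -!hgb.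
  by rewrite hWo // hFo // subrr.
have hXtP : X^T *m P = X^T by rewrite /P !mulmxA -/G (mulmxV hGu) mul1mx.
set N := D - P *m D.
have hXtN : X^T *m N = 0 by rewrite /N mulmxBr mulmxA hXtP subrr.
have hNtX : N^T *m X = 0 by rewrite -[N^T *m X]trmxK trmx_mul trmxK hXtN trmx0.
have hNM : N^T *m M = N^T.
  by rewrite /M mulmxBr mulmx1 -scalemxAr /P !mulmxA hNtX !mul0mx scaler0 subr0.
have hND : N^T *m D = N^T *m N.
  transitivity (N^T *m (D - P *m D)); last by [].
  by rewrite [RHS]mulmxBr /P !mulmxA hNtX !mul0mx subr0.
have hN0 : N = 0.
  apply: tr_sq0.
  have h1 : tangentSt X (N *m G).
    by rewrite /tangentSt trmx_mul hGT -mulmxA hNtX mulmx0 mulmxA hXtN mul0mx addr0.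
  have := hDo _ h1; rewrite hgb.
  have -> : (N *m G)^T *m M *m D *m Gi = G *m (N^T *m N) *m Gi.
    rewrite trmx_mul hGT -!mulmxA (mulmxA N^T M) hNM (mulmxA N^T D) hND.
    by rewrite !mulmxA.
  by rewrite mxtrace_mulC !mulmxA hXX (mulVmx hGu) mul1mx.
set A' := X^T *m D.
have hDeq : D = X *m Gi *m A'.
  have : N = 0 := hN0.
  by rewrite /N /P /A' !mulmxA => /eqP; rewrite subr_eq0 => /eqP.
have hA'T : A'^T = - A'.
  move: hDt; rewrite /tangentSt => /eqP; rewrite addr_eq0 => /eqP h.
  by rewrite /A' trmx_mul trmxK h.
set C := G *m A' *m G.
have hCT : C^T = - C by rewrite /C trmx_mul (trmx_mul G A') hGT hA'T mulNmx mulmxN mulmxA.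
have hCdef : C = G *m A' *m G by [].
have hGdef : G = X^T *m X by [].
clearbody C G N A' D.
have h2 : tangentSt X (X *m Gi *m C).
  rewrite /tangentSt !trmx_mul hGiT hCT !mulmxA hXX (mulmxKV hGu) -hGdef.
  by rewrite (mulmxV hGu) mul1mx addNr.
have := hDo _ h2; rewrite hgb hDeq !mulmxA hMX -!scalemxAl mxtraceZ.
rewrite !trmx_mul hGiT hCT !mulmxA hXX (mulmxKV hGu).
rewrite hCdef !mulNmx linearN /= (mulmxK hGu) mxtrace_mulC !mulmxA.
rewrite (mulVmx hGu) mul1mx => h.
have ht : \tr (A' *m A') = 0.
  by move/eqP: h; rewrite mulf_eq0 (gt_eqF hbeta) /= oppr_eq0 => /eqP.
have hA0 : A' = 0.
  by apply: tr_sq0; rewrite hA'T mulNmx linearN /= ht oppr0.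
apply/eqP; rewrite eq_sym -subr_eq0 -hDdef hDeq hA0 mulmx0 //.
Qed.
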